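(* Let $G_1=(V_1,E_1)$ be a finite connected graph with $n=|V_1|\ge 2$, let $u\in V_1$, and let $G$ be the graph obtained from $G_1$ by adding one new vertex $v$ and the single edge $\{u,v\}$. Let $D_1$, $D_G$ be the distance matrices of $G_1$, $G$. Assume: (C1) $2+\frac{k_1}{n}\neq 0$; (C2) $D_1$ is invertible; (C3) $k_u:=K_{G_1}(u)\neq 0$, where $K_{G_1}=nD_1^{-1}\mathbf{1}_n$ is the Steinerberger curvature of $G_1$ and $k_1=\sum_{x\in V_1}K_{G_1}(x)$ is its total curvature. Then $D_G$ is invertible and the Steinerberger curvature $K_G=(n+1)D_G^{-1}\mathbf{1}_{n+1}$ of $G$ satisfies $$K_G(x)=\alpha\,K_{G_1}(x)\quad\text{for all }x\in V_1\setminus\{u\},\qquad \alpha=\frac{2(n+1)}{2n+k_1},$$ $$K_G(u)=\gamma\,k_u,\quad \gamma=\Big(1-\frac{k_1}{2k_u}\Big)\alpha,\qquad K_G(v)=\frac{(n+1)k_1}{2n+k_1}.$$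
   Context: All graphs are finite, simple, connected and undirected, with the combinatorial shortest-path distance $d$. For $G=(V,E)$ with $V=\{v_1,\dots,v_n\}$, let $D=(d(v_i,v_j))_{i,j=1}^n$ be its distance matrix and $\mathbf{1}_n\in\mathbb{R}^n$ the all-ones column vector. The Steinerberger curvature $K\in\mathbb{R}^n$ (written $K_i$ or $K(v_i)$) is defined as follows: if $DK=n\mathbf{1}_n$ has a unique solution, $K$ is that solution; if it has several solutions, $K$ is a solution for which $\min_i K_i$ is maximal; if it has no solution, $K=nD^\dagger\mathbf{1}_n$ with $D^\dagger$ the Moore–Penrose pseudoinverse. The total curvature of a vertex subset $W$ is $K(W)=\sum_{w\in W}K(w)$. *)

(* Defs.v *)
From HB Require Import structures.
From mathcomp Require Import all_boot all_order all_algebra.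
Set Implicit Arguments. Unset Strict Implicit. Unset Printing Implicit Defensive.
Import Order.TTheory GRing.Theory Num.Theory.
Local Open Scope ring_scope.

(* A graph on vertex set 'I_n is an edge relation e : rel 'I_n; it is a finite
   simple undirected connected graph when e is symmetric, irreflexive and
   connect e relates every pair of vertices. *)

Fixpoint within (n : nat) (e : rel 'I_n) (k : nat) (x y : 'I_n) : bool :=
  match k with
  | 0 => x == y
  | k'.+1 => within e k' x y || [exists z, within e k' x z && e z y]
  end.

(* Combinatorial shortest-path distance: the least k with y within k steps of x
   (for a connected graph on n vertices such k < n exists). *)
Definition dist (n : nat) (e : rel 'I_n) (x y : 'I_n) : nat :=
  find (fun k => within e k x y) (iota 0 n).

Definition distmx (R : ringType) (n : nat) (e : rel 'I_n) : 'M[R]_n :=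
  \matrix_(i, j) (dist e i j)%:R.

(* Steinerberger curvature in the case of an invertible distance matrix:
   K = n D^{-1} 1_n (the unique solution of D K = n 1_n). *)
Definition curvature (R : fieldType) (n : nat) (e : rel 'I_n) : 'cV[R]_n :=
  n%:R *: (invmx (distmx R e) *m const_mx 1).

(* Graph on 'I_n.+1 obtained by adding a new vertex v := ord_max and the single
   edge {u, v}; old vertex x is  lift ord_max x. *)
Definition add_leaf (n : nat) (e : rel 'I_n) (u : 'I_n) : rel 'I_n.+1 :=
  fun a b =>
    match unlift ord_max a, unlift ord_max b with
    | Some x, Some y => e x y
    | Some x, None => x == u
    | None, Some y => y == u
    | None, None => false
    end.

(* Main.v *)
Require Import Defs.
From HB Require Import structures.
From mathcomp Require Import all_boot all_order all_algebra.
From mathcomp Require Import ring.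
Import Order.TTheory GRing.Theory Num.Theory.
Set Implicit Arguments. Unset Strict Implicit. Unset Printing Implicit Defensive.

Lemma within_mono n (e : rel 'I_n) k x y : within e k x y -> within e k.+1 x y.
Proof. by move=> h; rewrite /= h. Qed.

Lemma within_le n (e : rel 'I_n) m k x y : m <= k -> within e m x y -> within e k x y.
Proof.
elim: k => [|k IH]; first by rewrite leqn0 => /eqP ->.
rewrite leq_eqVlt => /orP [/eqP -> //|]; rewrite ltnS => h w.
exact/within_mono/IH.
Qed.

Lemma withinE n (e : rel 'I_n) k x y : within e k x y <->
  exists p : seq 'I_n, [/\ size p <= k, path e x p & last x p = y].
Proof.
elim: k y => [|k IH] y /=.
  split; first by move/eqP<-; exists [::].
  by case=> -[|z p] [] //= _ _ ->.
split.
  case/orP => [/IH [p [sp pp lp]]|/existsP [z /andP [/IH [p [sp pp lp]] ezy]]].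
    by exists p; split=> //; apply: leqW.
  exists (rcons p y); split.
  - by rewrite size_rcons.
  - by rewrite rcons_path pp lp.
  - by rewrite last_rcons.
case=> p [sp pp lp].
case/lastP: p sp pp lp => [|q z] sp pp lp.
  by apply/orP; left; apply/IH; exists [::].
apply/orP; right; apply/existsP; exists (last x q).
rewrite size_rcons in sp; rewrite rcons_path in pp; case/andP: pp => pq ez.
rewrite last_rcons in lp; subst z.
by apply/andP; split => //; apply/IH; exists q.
Qed.

Lemma within_sym n (e : rel 'I_n) k x y : symmetric e -> within e k x y -> within e k y x.
Proof.
move=> se /withinE [p [sp pp lp]]; apply/withinE.
exists (rev (belast x p)); split.
- by rewrite size_rev size_belast.
- by rewrite -lp rev_path; move: pp; apply: sub_path => a b /=; rewrite se.
- by rewrite -lp; case: p {sp pp lp} => [|z p] //=; rewrite rev_cons last_rcons.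
Qed.

Lemma connect_within n (e : rel 'I_n) x y : connect e x y ->
  exists2 k, k < n & within e k x y.
Proof.
move/connectP=> [p pp ->]; case/shortenP: pp => p' pp' up' _.
exists (size p').
  have /card_uniqP hc := up'; have := max_card (mem (x :: p')).
  by rewrite hc card_ord.
by apply/withinE; exists p'.
Qed.

Lemma existsS n (P : pred 'I_n.+1) :
  [exists z, P z] = [exists z : 'I_n, P (lift ord_max z)] || P ord_max.
Proof.
apply/existsP/orP.
  case=> z; case: (unliftP ord_max z) => [z'|] -> Pz; [left; apply/existsP; exists z' => // | by right].
case=> [/existsP [z Pz]|Pm]; [by exists (lift ord_max z) | by exists ord_max].
Qed.

Section G.
End G.

Lemma eG_ll n (e : rel 'I_n) u x y : add_leaf e u (lift ord_max x) (lift ord_max y) = e x y.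
Proof. by rewrite /add_leaf !liftK. Qed.
Lemma eG_lm n (e : rel 'I_n) u x : add_leaf e u (lift ord_max x) ord_max = (x == u).
Proof. by rewrite /add_leaf liftK unlift_none. Qed.
Lemma eG_ml n (e : rel 'I_n) u x : add_leaf e u ord_max (lift ord_max x) = (x == u).
Proof. by rewrite /add_leaf liftK unlift_none. Qed.
Lemma eG_mm n (e : rel 'I_n) u : add_leaf e u ord_max ord_max = false.
Proof. by rewrite /add_leaf unlift_none. Qed.

Lemma withinG n (e : rel 'I_n) u k :
  [/\ (forall x y, within (add_leaf e u) k (lift ord_max x) (lift ord_max y) = within e k x y),
      (forall x, within (add_leaf e u) k (lift ord_max x) ord_max = (0 < k) && within e k.-1 x u),
      (forall y, within (add_leaf e u) k ord_max (lift ord_max y) = (0 < k) && within e k.-1 u y) &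
      within (add_leaf e u) k ord_max ord_max].
Proof.
elim: k => [|k [IH1 IH2 IH3 IH4]].
  split => /=; last by [].
  - by move=> x y; rewrite (inj_eq (@lift_inj _ _)).
  - by move=> x; rewrite eq_sym (negbTE (neq_lift _ _)).
  - by move=> y; rewrite (negbTE (neq_lift _ _)).
split => /=; last by rewrite IH4.
- move=> x y; rewrite existsS IH1 IH2 eG_ml.
  under eq_existsb do rewrite IH1 eG_ll.
  case: (boolP ((0 < k) && within e k.-1 x u && (y == u))) => [|_]; last by rewrite !orbF.
  case: k {IH1 IH2 IH3 IH4} => //= k /andP [h /eqP ->].
  by rewrite h orbT.
- move=> x; rewrite existsS IH2 eG_mm andbF orbF.
  under eq_existsb do rewrite IH1 eG_lm.
  have -> : [exists z, within e k x z && (z == u)] = within e k x u.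
    apply/existsP/idP => [[z /andP [h /eqP <-]] //|h]; exists u; by rewrite h eqxx.
  by case: k {IH1 IH2 IH3 IH4} => //= k; case: (within e k x u) => //= ->.
- move=> y; rewrite existsS IH3 IH4 eG_ml /=.
  under eq_existsb do rewrite IH3 eG_ll.
  case: k {IH1 IH2 IH3 IH4} => [|k] /=.
    have -> : [exists x : 'I_n, false] = false by apply/existsP => -[].
    by rewrite eq_sym.
  case: (boolP (y == u)) => [/eqP ->|_]; last by rewrite orbF.
  have w : within e k u u by apply: (@within_le _ _ 0) => //=; rewrite eqxx.
  by rewrite w.
Qed.

Lemma withinG1 n (e : rel 'I_n) u k x y :
  within (add_leaf e u) k (lift ord_max x) (lift ord_max y) = within e k x y.
Proof. by case: (withinG e u k). Qed.
Lemma withinG2 n (e : rel 'I_n) u k x :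
  within (add_leaf e u) k (lift ord_max x) ord_max = (0 < k) && within e k.-1 x u.
Proof. by case: (withinG e u k). Qed.
Lemma withinG3 n (e : rel 'I_n) u k y :
  within (add_leaf e u) k ord_max (lift ord_max y) = (0 < k) && within e k.-1 u y.
Proof. by case: (withinG e u k). Qed.

Lemma dist0 n (e : rel 'I_n) x : dist e x x = 0.
Proof. rewrite /dist; case: n e x => [|n] e x; first by case: x. by rewrite /= eqxx. Qed.

Lemma dist_sym n (e : rel 'I_n) x y : symmetric e -> dist e x y = dist e y x.
Proof. move=> se; rewrite /dist; apply: eq_find => k; apply/idP/idP; exact: within_sym. Qed.

Lemma distG_ll n (e : rel 'I_n) u x y : connect e x y ->
  dist (add_leaf e u) (lift ord_max x) (lift ord_max y) = dist e x y.
Proof.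
move=> c; rewrite /dist (eq_find (fun k => withinG1 e u k x y)).
rewrite -addn1 iotaD find_cat; have [k kn w] := connect_within c.
suff -> : has (fun k => within e k x y) (iota 0 n) by [].
by apply/hasP; exists k; rewrite // mem_iota.
Qed.

Lemma distG_lm n (e : rel 'I_n) u x :
  dist (add_leaf e u) (lift ord_max x) ord_max = (dist e x u).+1.
Proof.
rewrite /dist (eq_find (fun k => withinG2 e u k x)) /=.
have -> : iota 1 n = [seq 1 + i | i <- iota 0 n] by rewrite -iotaDl.
by rewrite find_map.
Qed.

Lemma distG_ml n (e : rel 'I_n) u y :
  dist (add_leaf e u) ord_max (lift ord_max y) = (dist e u y).+1.
Proof.
rewrite /dist (eq_find (fun k => withinG3 e u k y)) /=.
have -> : iota 1 n = [seq 1 + i | i <- iota 0 n] by rewrite -iotaDl.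
by rewrite find_map.
Qed.

Local Open Scope ring_scope.

Lemma sumS (R : nmodType) n (F : 'I_n.+1 -> R) :
  \sum_i F i = \sum_(i < n) F (lift ord_max i) + F ord_max.
Proof.
rewrite big_ord_recr; congr (_ + _); apply: eq_bigr => i _; congr F.
by apply: val_inj => /=; rewrite /bump leqNgt ltn_ord.
Qed.

Lemma sum_delta (R : pzRingType) n (u : 'I_n) (F : 'I_n -> R) :
  \sum_x (x == u)%:R * F x = F u.
Proof.
rewrite (bigD1 u) //= eqxx mul1r big1 ?addr0 // => x /negbTE ->; by rewrite mul0r.
Qed.

Unset Implicit Arguments.

Theorem mainTheorem4 (R : realFieldType) (n : nat) (e : rel 'I_n) (u : 'I_n) :
  (2 <= n)%N -> symmetric e -> irreflexive e -> (forall x y, connect e x y) ->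
  let K1 := curvature R e in
  let k1 := \sum_(x < n) K1 x 0 in
  let ku := K1 u 0 in
  2 + k1 / n%:R != 0 ->
  distmx R e \in unitmx ->
  ku != 0 ->
  let eG := add_leaf e u in
  distmx R eG \in unitmx /\
  (let KG := curvature R eG in
   let alpha := (2 * n.+1%:R) / (2 * n%:R + k1) in
   let gamma := (1 - k1 / (2 * ku)) * alpha in
   (forall x : 'I_n, x != u -> KG (lift ord_max x) 0 = alpha * K1 x 0) /\
   KG (lift ord_max u) 0 = gamma * ku /\
   KG ord_max 0 = (n.+1%:R * k1) / (2 * n%:R + k1)).
Proof.
move=> n2 se ir con K1 k1 ku C1 DU kuN eG.
set D := distmx R e; set DG := distmx R eG.
have n0 : n%:R != 0 :> R by rewrite pnatr_eq0 -lt0n (leq_trans _ n2).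
have DGll x y : DG (lift ord_max x) (lift ord_max y) = D x y by rewrite !mxE distG_ll.
have DGlm x : DG (lift ord_max x) ord_max = D x u + 1 by rewrite !mxE distG_lm -natr1.
have DGml y : DG ord_max (lift ord_max y) = D u y + 1 by rewrite !mxE distG_ml -natr1.
have DGmm : DG ord_max ord_max = 0 by rewrite mxE dist0.
have Dsym x y : D x y = D y x by rewrite !mxE dist_sym.
have Duu : D u u = 0 by rewrite mxE dist0.
have SK x : \sum_y D x y * K1 y 0 = n%:R.
  have : D *m K1 = n%:R *: const_mx 1.
    by rewrite /K1 /curvature -scalemxAr mulmxA mulmxV // mul1mx.
  by move/(congr1 (fun M : 'cV[R]_n => M x 0)); rewrite !mxE mulr1.
have SK' x : \sum_y K1 y 0 * D y x = n%:R.
  by rewrite -(SK x); apply: eq_bigr => y _; rewrite Dsym mulrC.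
have nk : 2 * n%:R + k1 != 0.
  have -> : 2 * n%:R + k1 = n%:R * (2 + k1 / n%:R) by field.
  by rewrite mulf_eq0 negb_or n0 C1.
have DGU : DG \in unitmx.
  rewrite unitmxE unitfE; apply/negP => /det0P [v vn0 hv].
  suff v0 : v = 0 by rewrite v0 eqxx in vn0.
  have hc j : \sum_i v 0 i * DG i j = 0.
    by move: (congr1 (fun M : 'rV[R]_n.+1 => M 0 j) hv); rewrite !mxE.
  have h1 y : \sum_x v 0 (lift ord_max x) * D x y + v 0 ord_max * (D u y + 1) = 0.
    rewrite -[RHS](hc (lift ord_max y)) sumS DGml; congr (_ + _).
    by apply: eq_bigr => x _; rewrite DGll.
  have h2 : \sum_x v 0 (lift ord_max x) * (D x u + 1) = 0.
    rewrite -[RHS](hc ord_max) sumS DGmm mulr0 addr0.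
    by apply: eq_bigr => x _; rewrite DGlm.
  set t := v 0 ord_max.
  pose r : 'rV[R]_n := \row_x (v 0 (lift ord_max x) + t * ((x == u)%:R + K1 x 0 / n%:R)).
  have hr : r *m D = 0.
    apply/rowP => y; rewrite !mxE.
    rewrite (eq_bigr (fun x => v 0 (lift ord_max x) * D x y + t * ((x == u)%:R * D x y)
        + (t / n%:R) * (K1 x 0 * D x y))); last by move=> x _; rewrite mxE; ring.
    rewrite !big_split /= -!mulr_sumr sum_delta SK' -[RHS](h1 y) -/t; field; by rewrite ?n0.
  have r0 : r = 0 by rewrite -(mulmxK DU r) hr mul0mx.
  have wE x : v 0 (lift ord_max x) = - t * ((x == u)%:R + K1 x 0 / n%:R).
    move/rowP: r0 => /(_ x); rewrite !mxE => /eqP; rewrite addr_eq0 => /eqP ->; ring.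
  have t0 : t = 0.
    move: h2; rewrite (eq_bigr (fun x => -t * ((x == u)%:R * (D x u + 1))
        + (- t / n%:R) * (K1 x 0 * D x u) + (- t / n%:R) * K1 x 0)); last first.
      by move=> x _; rewrite wE; ring.
    rewrite !big_split /= -!mulr_sumr sum_delta Duu SK' -/k1 => h.
    have : t * (2 + k1 / n%:R) = 0 by rewrite -[RHS]oppr0 -[X in - X]h; field; by rewrite ?n0.
    by move/eqP; rewrite mulf_eq0 (negbTE C1) orbF => /eqP.
  apply/rowP => i; rewrite mxE; case: (unliftP ord_max i) => [x|] ->; last exact: t0.
  by rewrite wE t0; ring.
pose b := (n.+1%:R * k1) / (2 * n%:R + k1).
pose alpha := (2 * n.+1%:R) / (2 * n%:R + k1).
pose K' : 'cV[R]_n.+1 := \col_i (if unlift ord_max i is Some x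
                                 then alpha * K1 x 0 - b * (x == u)%:R else b).
have K'l x : K' (lift ord_max x) 0 = alpha * K1 x 0 - b * (x == u)%:R by rewrite mxE liftK.
have K'm : K' ord_max 0 = b by rewrite mxE unlift_none.
have hK : DG *m K' = n.+1%:R *: const_mx 1.
  apply/colP => i; rewrite !mxE sumS mulr1.
  case: (unliftP ord_max i) => [x|] ->.
    rewrite DGlm K'm (eq_bigr (fun y => alpha * (D x y * K1 y 0) - b * ((y == u)%:R * D x y))).
      rewrite big_split /= sumrN -!mulr_sumr sum_delta SK -natr1 /b /alpha; field.
      by rewrite ?nk.
    by move=> y _; rewrite DGll K'l; ring.
  rewrite DGmm K'm (eq_bigr (fun y => alpha * (D u y * K1 y 0) + alpha * K1 y 0
        - b * ((y == u)%:R * D u y) - b * ((y == u)%:R))).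
    rewrite !big_split /= !sumrN -!mulr_sumr sum_delta SK -/k1.
    rewrite (eq_bigr (fun y => (y == u)%:R * 1)) ?sum_delta ?Duu; last by move=> y _; rewrite mulr1.
    rewrite -natr1 /b /alpha; field.
    by rewrite ?nk.
  by move=> y _; rewrite DGml K'l; ring.
have KGE : curvature R eG = K'.
  by rewrite /curvature scalemxAr -/DG -hK mulKmx.
split => //.
move=> KG al ga; rewrite /KG KGE /ga /al.
split; first by move=> x xu; rewrite K'l (negbTE xu) mulr0 subr0.
split; last by rewrite K'm.
rewrite K'l eqxx mulr1 /b /alpha -/ku; field.
by rewrite ?kuN ?nk ?pnatr_eq0.
Qed.
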